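(* For a liner $X$ the following are equivalent: (1) $X$ is modular; (2) $X$ is strongly regular; (3) $X$ contains no two disjoint coplanar lines.
   Context: A liner is a set $X$ of points with a family of subsets called lines such that any two distinct points lie in a unique line and every line contains at least two points. For distinct $x,y$, $\overline{xy}$ is the line through them. A set is flat if it contains $\overline{xy}$ for all its distinct points $x,y$; $\overline A$ is the smallest flat containing $A$. The rank $\|A\|$ is the smallest cardinality of $B\subseteq X$ with $A\subseteq\overline B$. A plane is a flat of rank $3$; two lines are coplanar if both are contained in some plane. $X$ is modular if $\|A\cap B\|+\|A\cup B\|=\|A\|+\|B\|$ for all flats $A,B\subseteq X$. $X$ is strongly regular if for every nonempty flat $A\subseteq X$ and point $b\in X\setminus A$ we have $\overline{A\cup\{b\}}=\bigcup_{a\in A}\overline{ab}$. *)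

(* Defs.v *)
From Stdlib Require Import Classical.

Set Implicit Arguments.

Section Liners.
Variable X : Type.
Variable L : (X -> Prop) -> Prop.

Definition is_liner : Prop :=
  (forall l, L l -> exists x y, x <> y /\ l x /\ l y) /\
  (forall x y, x <> y -> exists l, L l /\ l x /\ l y /\
     forall l', L l' -> l' x -> l' y -> forall z, l' z <-> l z).

(* the line through x and y (meaningful for x <> y) *)
Definition line (x y : X) : X -> Prop :=
  fun z => exists l, L l /\ l x /\ l y /\ l z.

Definition subset (A B : X -> Prop) : Prop := forall z, A z -> B z.

Definition flat (A : X -> Prop) : Prop :=
  forall x y, x <> y -> A x -> A y -> subset (line x y) A.

Definition closure (A : X -> Prop) : X -> Prop :=
  fun z => forall F, flat F -> subset A F -> F z.

(* Cardinal comparison of (sub)sets, via their sigma-types. *)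
Definition card_le (T U : Type) : Prop :=
  exists f : T -> U, forall a b, f a = f b -> a = b.

Definition equipotent (T U : Type) : Prop :=
  exists (f : T -> U) (g : U -> T),
    (forall a, g (f a) = a) /\ (forall b, f (g b) = b).

(* B realizes the rank of A: A is contained in the closure of B, and B has the
   smallest cardinality among all such sets. So the cardinal of B is ||A||. *)
Definition rank_basis (A B : X -> Prop) : Prop :=
  subset A (closure B) /\
  forall C, subset A (closure C) -> card_le {x | B x} {x | C x}.

Definition modular : Prop :=
  forall A B, flat A -> flat B ->
  forall BI BU BA BB,
    rank_basis (fun z => A z /\ B z) BI ->
    rank_basis (fun z => A z \/ B z) BU ->
    rank_basis A BA -> rank_basis B BB ->
    equipotent ({x | BI x} + {x | BU x})%type ({x | BA x} + {x | BB x})%type.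

Definition strongly_regular : Prop :=
  forall A b, flat A -> (exists a, A a) -> ~ A b ->
    forall z, closure (fun w => A w \/ w = b) z <-> exists a, A a /\ line a b z.

Definition plane (P : X -> Prop) : Prop :=
  flat P /\ exists B, rank_basis P B /\ equipotent {x | B x} {i : nat | i < 3}.

Definition coplanar (l1 l2 : X -> Prop) : Prop :=
  exists P, plane P /\ subset l1 P /\ subset l2 P.

Definition no_disjoint_coplanar_lines : Prop :=
  ~ exists l1 l2, L l1 /\ L l2 /\ (forall z, ~ (l1 z /\ l2 z)) /\ coplanar l1 l2.

End Liners.

(* Main.v *)
From Stdlib Require Import Classical ClassicalEpsilon ProofIrrelevance List Lia.
From mathcomp Require classical_sets boolp.
Require Import Defs.
Unset Asymmetric Patterns.
Set Bullet Behavior "Strict Subproofs".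
Set Implicit Arguments.
Lemma myZorn (T : Type) (P : (T -> Prop) -> Prop) :
  (forall F : (T -> Prop) -> Prop, (forall S, F S -> P S) ->
     (forall S1 S2, F S1 -> F S2 -> subset S1 S2 \/ subset S2 S1) ->
     P (fun x => exists S, F S /\ S x)) ->
  exists A, P A /\ forall B, subset A B -> P B -> subset B A.
Proof.
intros H.
destruct (@classical_sets.Zorn_bigcup T P) as [A [PA HA]].
- intros F FP Ftot.
  assert (E : classical_sets.bigcup F (fun X => X) = (fun x => exists S, F S /\ S x)).
  { apply boolp.funext; intro x; apply boolp.propext; split.
    - intros [i Fi Hi]; eauto.
    - intros [S [FS Sx]]; exists S; auto. }
  rewrite E. apply H; [exact FP|]. intros S1 S2 h1 h2. exact (Ftot S1 S2 h1 h2).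
- exists A; split; auto. intros B AB PB x Bx.
  apply NNPP; intro nA. apply (HA B); auto.
  split; [exact AB|]. intro BA. apply nA. apply BA. exact Bx.
Qed.

Lemma chain_list (X Y : Type) (F : (Y -> Prop) -> Prop) (Q : (Y -> Prop) -> X -> Prop) (P0 : X -> Prop) :
 (forall S1 S2, F S1 -> F S2 -> subset S1 S2 \/ subset S2 S1) ->
 (forall S1 S2 w, subset S1 S2 -> Q S1 w -> Q S2 w) ->
 forall l, (forall w, In w l -> P0 w \/ exists S, F S /\ Q S w) ->
 (forall w, In w l -> P0 w) \/ exists M, F M /\ forall w, In w l -> P0 w \/ Q M w.
Proof.
  intros tot mono l. induction l as [|a l IH]; intros H.
  - left. intros w [].
  - assert (IH' := IH (fun w hw => H w (or_intror hw))).
    destruct (H a (or_introl eq_refl)) as [Pa|[S [FS QS]]].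
    + destruct IH' as [IHl|[M [FM HM]]].
      * left. intros w [<-|hw]; auto.
      * right. exists M. split; auto. intros w [<-|hw]; auto.
    + destruct IH' as [IHl|[M [FM HM]]].
      * right. exists S. split; auto. intros w [<-|hw]; auto.
      * destruct (tot S M FS FM) as [SM|MS].
        -- right. exists M. split; auto. intros w [<-|hw]; eauto.
        -- right. exists S. split; auto. intros w [<-|hw]; auto.
           destruct (HM w hw); eauto.
Qed.


Lemma SB T U : card_le T U -> card_le U T -> equipotent T U.
Proof.
  intros [f fi] [g gi].
  set (C := fun t => exists n t0, (~ exists u, g u = t0) /\ t = Nat.iter n (fun s => g (f s)) t0).
  assert (nCi : forall t, ~ C t -> exists u, g u = t).
  { intros t nt. apply NNPP; intro h. apply nt. exists 0, t. split; auto. }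
  set (h := fun t => match excluded_middle_informative (C t) with
                     | left _ => f t
                     | right nt => proj1_sig (constructive_indefinite_description _ (nCi t nt)) end).
  assert (hs : forall t, (C t /\ h t = f t) \/ (~ C t /\ g (h t) = t)).
  { intros t. unfold h. destruct (excluded_middle_informative (C t)) as [c|c]; [left; auto|right].
    destruct (constructive_indefinite_description _ (nCi t c)); simpl; auto. }
  assert (Cs : forall t, C t -> C (g (f t))).
  { intros t [n [t0 [h1 h2]]]. exists (S n), t0. split; auto. simpl. rewrite h2; auto. }
  assert (hinj : forall a b, h a = h b -> a = b).
  { intros a b e. destruct (hs a) as [[ca ea]|[ca ea]]; destruct (hs b) as [[cb eb]|[cb eb]].
    - apply fi. congruence.
    - exfalso. apply cb. rewrite <- eb, <- e, ea. apply Cs; auto.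
    - exfalso. apply ca. rewrite <- ea, e, eb. apply Cs; auto.
    - rewrite <- ea, <- eb, e. auto. }
  assert (hsurj : forall u, exists t, h t = u).
  { intros u. destruct (classic (C (g u))) as [c|c].
    - destruct c as [n [t0 [n0 e]]]. destruct n as [|m].
      + exfalso. apply n0. exists u. simpl in e. auto.
      + simpl in e. apply gi in e. exists (Nat.iter m (fun s => g (f s)) t0).
        destruct (hs (Nat.iter m (fun s => g (f s)) t0)) as [[_ e2]|[e2 _]].
        * rewrite e2. auto.
        * exfalso. apply e2. exists m, t0. auto.
    - exists (g u). destruct (hs (g u)) as [[c2 _]|[_ e]]; [contradiction|]. apply gi; auto. }
  exists h, (fun u => proj1_sig (constructive_indefinite_description _ (hsurj u))).
  split.
  - intros a. apply hinj. destruct (constructive_indefinite_description _ (hsurj (h a))); simpl; auto.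
  - intros b. destruct (constructive_indefinite_description _ (hsurj b)); simpl; auto.
Qed.

Lemma eqp_sym T U : equipotent T U -> equipotent U T.
Proof. intros [f [g [h1 h2]]]. exists g, f. auto. Qed.

Lemma eqp_trans T U V : equipotent T U -> equipotent U V -> equipotent T V.
Proof.
  intros [f [g [h1 h2]]] [f' [g' [h1' h2']]]. exists (fun x => f' (f x)), (fun x => g (g' x)).
  split; intros; [rewrite h1'; auto|rewrite h2; auto].
Qed.

Lemma eqp_sum T U T' U' : equipotent T T' -> equipotent U U' -> equipotent (T + U) (T' + U').
Proof.
  intros [f [g [h1 h2]]] [f' [g' [h1' h2']]].
  exists (fun s => match s with inl a => inl (f a) | inr b => inr (f' b) end),
         (fun s => match s with inl a => inl (g a) | inr b => inr (g' b) end).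
  split; intros [a|b]; f_equal; auto.
Qed.

Lemma sig_eq (Y : Type) (P : Y -> Prop) (a b : Y) (pa : P a) (pb : P b) : a = b -> exist P a pa = exist P b pb.
Proof. intros e. subst. f_equal. apply proof_irrelevance. Qed.

Lemma IB_IU (Y : Type) (I IU IA : Y -> Prop) b : I b \/ (IU b /\ ~ IA b) -> ~ I b -> IU b.
Proof. tauto. Qed.

Lemma middle_bij (Y : Type) (I IA IU : Y -> Prop) : subset I IA -> subset IA IU ->
  equipotent ({x | I x} + {x | IU x})%type ({x | IA x} + {x | I x \/ (IU x /\ ~ IA x)})%type.
Proof.
  intros IIA IAU.
  exists (fun s : ({x | I x} + {x | IU x})%type => match s with
           | inl (exist _ i Ii) => inr (exist (fun x => I x \/ (IU x /\ ~ IA x)) i (or_introl Ii))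
           | inr (exist _ u Uu) => match excluded_middle_informative (IA u) with
                                 | left h => inl (exist IA u h)
                                 | right h => inr (exist (fun x => I x \/ (IU x /\ ~ IA x)) u (or_intror (conj Uu h)))
                                 end end),
         (fun s : ({x | IA x} + {x | I x \/ (IU x /\ ~ IA x)})%type => match s with
           | inl (exist _ a Aa) => inr (exist IU a (IAU a Aa))
           | inr (exist _ b Bb) => match excluded_middle_informative (I b) with
                                 | left h => inl (exist I b h)
                                 | right h => inr (exist IU b (@IB_IU Y I IU IA b Bb h))
                                 end end).
  split.
  - intros [[i Ii]|[u Uu]].
    + destruct (excluded_middle_informative (I i)) as [h|h]; [|contradiction].
      f_equal. apply sig_eq; auto.
    + destruct (excluded_middle_informative (IA u)) as [h|h].
      * f_equal. apply sig_eq; auto.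
      * destruct (excluded_middle_informative (I u)) as [h'|h'].
        -- exfalso. apply h. apply IIA. auto.
        -- f_equal. apply sig_eq; auto.
  - intros [[a Aa]|[b Bb]].
    + destruct (excluded_middle_informative (IA a)) as [h|h]; [|contradiction].
      f_equal. apply sig_eq; auto.
    + destruct (excluded_middle_informative (I b)) as [h|h].
      * f_equal. apply sig_eq; auto.
      * destruct (excluded_middle_informative (IA b)) as [h'|h'].
        -- exfalso. destruct Bb as [Ib|[_ nb]]; auto.
        -- f_equal. apply sig_eq; auto.
Qed.

Section Basic.
Variable X : Type.
Variable L : (X -> Prop) -> Prop.
Hypothesis HL : is_liner L.

Notation cl := (closure L).
Notation ln := (line L).

Lemma line_unique x y l : x <> y -> L l -> l x -> l y -> forall z, ln x y z <-> l z.
Proof.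
  intros xy Ll lx ly z. destruct HL as [_ H2].
  destruct (H2 x y xy) as [l0 [L0 [l0x [l0y U]]]].
  split.
  - intros [l' [L' [l'x [l'y l'z]]]].
    apply (U l Ll lx ly). apply (U l' L' l'x l'y). exact l'z.
  - intros lz. exists l; auto.
Qed.

Lemma line_ex x y : x <> y -> exists l, L l /\ l x /\ l y.
Proof. intros xy. destruct HL as [_ H2]. destruct (H2 x y xy) as [l0 [? [? [? _]]]]. eauto. Qed.

Lemma line_x x y : x <> y -> ln x y x.
Proof. intros xy. destruct (line_ex xy) as [l [? [? ?]]]. exists l; auto. Qed.
Lemma line_y x y : x <> y -> ln x y y.
Proof. intros xy. destruct (line_ex xy) as [l [? [? ?]]]. exists l; auto. Qed.
Lemma line_sym x y z : ln x y z -> ln y x z.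
Proof. intros [l [? [? [? ?]]]]. exists l; auto. Qed.

Lemma line_eq x y u v : x <> y -> u <> v -> ln x y u -> ln x y v ->
  forall z, ln u v z <-> ln x y z.
Proof.
  intros xy uv hu hv z. destruct (line_ex xy) as [l [Ll [lx ly]]].
  rewrite (line_unique xy Ll lx ly z).
  apply line_unique; auto.
  - apply (line_unique xy Ll lx ly); auto.
  - apply (line_unique xy Ll lx ly); auto.
Qed.

Lemma flat_L l : L l -> flat L l.
Proof. intros Ll u v uv lu lv z h. apply (line_unique uv Ll lu lv); auto. Qed.

Lemma closure_flat A : flat L (cl A).
Proof. intros u v uv hu hv z hz F FF AF. exact (FF u v uv (hu F FF AF) (hv F FF AF) z hz). Qed.
Lemma sub_closure A : subset A (cl A).
Proof. intros z Az F FF AF. auto. Qed.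
Lemma closure_min A F : flat L F -> subset A F -> subset (cl A) F.
Proof. intros FF AF z h. apply h; auto. Qed.
Lemma closure_mono A B : subset A B -> subset (cl A) (cl B).
Proof. intros AB z h F FF BF. apply h; auto. intros w Aw; auto. Qed.

Lemma flat_single c : flat L (fun w => w = c).
Proof. intros u v uv hu hv. subst. congruence. Qed.
Lemma flat_empty : flat L (fun _ => False).
Proof. intros u v uv hu. contradiction. Qed.

Lemma flat_line x y : x <> y -> flat L (ln x y).
Proof. intros xy u v uv hu hv z hz. apply (line_eq xy uv hu hv); auto. Qed.

Lemma line_sub_flat F x y : flat L F -> x <> y -> F x -> F y -> subset (ln x y) F.
Proof. intros FF xy fx fy. apply FF; auto. Qed.

Lemma finitary A z : cl A z ->
  exists l : list X, (forall w, In w l -> A w) /\ cl (fun w => In w l) z.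
Proof.
  intros h. apply (closure_min (A:=A) (F := fun z => exists l : list X, (forall w, In w l -> A w) /\ cl (fun w => In w l) z)); auto.
  - intros u v uv [l1 [h1 c1]] [l2 [h2 c2]] z0 hz.
    exists (l1 ++ l2). split.
    + intros w hw. apply in_app_or in hw. destruct hw; auto.
    + apply (closure_flat uv).
      * apply (closure_mono (A := fun w => In w l1)); auto. intros w hw. apply in_or_app; auto.
      * apply (closure_mono (A := fun w => In w l2)); auto. intros w hw. apply in_or_app; auto.
      * exact hz.
  - intros w Aw. exists (w :: nil). split.
    + intros w' [<-|[]]; auto.
    + apply sub_closure. simpl; auto.
Qed.

Lemma small_closure C : (forall c1 c2 c3, C c1 -> C c2 -> C c3 -> c1 = c2 \/ c1 = c3 \/ c2 = c3) ->
  forall x y, x <> y -> cl C x -> cl C y -> forall z, cl C z -> ln x y z.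
Proof.
  intros H3 x y xy hx hy z hz.
  destruct (classic (exists c1 c2, C c1 /\ C c2 /\ c1 <> c2)) as [[c1 [c2 [h1 [h2 h12]]]]|N].
  - assert (S : subset (cl C) (ln c1 c2)).
    { apply closure_min. apply flat_line; auto.
      intros c hc. destruct (H3 c1 c2 c h1 h2 hc) as [e|[e|e]]; [contradiction| |]; subst.
      apply line_x; auto. apply line_y; auto. }
    apply (line_eq h12 xy (S _ hx) (S _ hy)). auto.
  - exfalso. destruct (classic (exists c, C c)) as [[c hc]|N2].
    + assert (S : subset (cl C) (fun w => w = c)).
      { apply closure_min. apply flat_single. intros w hw. apply NNPP. intro ne.
        apply N. exists w, c. auto. }
      apply xy. rewrite (S _ hx), (S _ hy). auto.
    + assert (S : subset (cl C) (fun _ => False)).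
      { apply closure_min. apply flat_empty. intros w hw. apply N2. eauto. }
      exact (S _ hx).
Qed.

Lemma small_closure2 C : (forall c1 c2, C c1 -> C c2 -> c1 = c2) ->
  forall x y, cl C x -> cl C y -> x = y.
Proof.
  intros H2 x y hx hy.
  destruct (classic (exists c, C c)) as [[c hc]|N2].
  - assert (S : subset (cl C) (fun w => w = c)).
    { apply closure_min. apply flat_single. intros w hw. apply H2; auto. }
    rewrite (S _ hx), (S _ hy). auto.
  - assert (S : subset (cl C) (fun _ => False)).
    { apply closure_min. apply flat_empty. intros w hw. apply N2. eauto. }
    destruct (S _ hx).
Qed.

Lemma card_le_3 T (C : X -> Prop) : equipotent T {i | i < 3} ->
  (exists c0 c1 c2, C c0 /\ C c1 /\ C c2 /\ c0 <> c1 /\ c0 <> c2 /\ c1 <> c2) ->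
  card_le T {x | C x}.
Proof.
  intros [f [g [fg gf]]] [c0 [c1 [c2 [h0 [h1 [h2 [d01 [d02 d12]]]]]]]].
  set (pick := fun n : nat => match n with 0 => c0 | 1 => c1 | _ => c2 end).
  assert (pC : forall n, C (pick n)) by (intros [|[|n]]; simpl; auto).
  exists (fun t => exist C (pick (proj1_sig (f t))) (pC _)).
  intros t t' e. injection e. intros e'.
  assert (E : f t = f t').
  { destruct (f t) as [n hn], (f t') as [m hm]. simpl in e'. apply sig_eq.
    destruct n as [|[|[|n]]]; destruct m as [|[|[|m]]]; simpl in e'; try lia; congruence. }
  rewrite <- (fg t), <- (fg t'), E. auto.
Qed.

Lemma equip3 (a b c : X) : a <> b -> a <> c -> b <> c ->
  equipotent {v | v = a \/ v = b \/ v = c} {i | i < 3}.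
Proof.
  intros ab ac bc.
  set (idx := fun v => if excluded_middle_informative (v = a) then 0 else if excluded_middle_informative (v = b) then 1 else 2).
  assert (il : forall v, idx v < 3).
  { intros v. unfold idx. destruct (excluded_middle_informative (v = a)); [lia|].
    destruct (excluded_middle_informative (v = b)); lia. }
  exists (fun v => exist (fun i => i < 3) (idx (proj1_sig v)) (il _)).
  exists (fun i => match proj1_sig i with
           | 0 => exist (fun v => v = a \/ v = b \/ v = c) a (or_introl eq_refl)
           | 1 => exist (fun v => v = a \/ v = b \/ v = c) b (or_intror (or_introl eq_refl))
           | _ => exist (fun v => v = a \/ v = b \/ v = c) c (or_intror (or_intror eq_refl)) end).
  split.
  - intros [v hv]. simpl. unfold idx.
    destruct (excluded_middle_informative (v = a)) as [e|e]; [apply sig_eq; auto|].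
    destruct (excluded_middle_informative (v = b)) as [e'|e']; [apply sig_eq; auto|].
    apply sig_eq. destruct hv as [h|[h|h]]; congruence.
  - intros [i hi]. apply sig_eq. simpl.
    destruct i as [|[|[|n]]]; simpl; unfold idx.
    + destruct (excluded_middle_informative (a = a)); congruence.
    + destruct (excluded_middle_informative (b = a)); [congruence|].
      destruct (excluded_middle_informative (b = b)); congruence.
    + destruct (excluded_middle_informative (c = a)); [congruence|].
      destruct (excluded_middle_informative (c = b)); [congruence|]. auto.
    + lia.
Qed.

Lemma three_or_small (C : X -> Prop) :
  (exists c0 c1 c2, C c0 /\ C c1 /\ C c2 /\ c0 <> c1 /\ c0 <> c2 /\ c1 <> c2) \/
  (forall c1 c2 c3, C c1 -> C c2 -> C c3 -> c1 = c2 \/ c1 = c3 \/ c2 = c3).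
Proof.
  destruct (classic (exists c0 c1 c2, C c0 /\ C c1 /\ C c2 /\ c0 <> c1 /\ c0 <> c2 /\ c1 <> c2)) as [h|N]; [left; auto|right].
  intros c1 c2 c3 h1 h2 h3.
  destruct (classic (c1 = c2)); auto. destruct (classic (c1 = c3)); auto. destruct (classic (c2 = c3)); auto.
  exfalso. apply N. exists c1, c2, c3. tauto.
Qed.

Lemma mod_nodisj : modular L -> no_disjoint_coplanar_lines L.
Proof.
  intros M [l1 [l2 [L1 [L2 [disj [P [[FP [BP [rP eP]]] [s1 s2]]]]]]]].
  destruct HL as [H1 _].
  destruct (H1 l1 L1) as [x1 [y1 [d1 [x1l y1l]]]].
  destruct (H1 l2 L2) as [x2 [y2 [d2 [x2l y2l]]]].
  assert (rl : forall l x y, L l -> x <> y -> l x -> l y -> rank_basis L l (fun z => z = x \/ z = y)).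
  { intros l x y Ll xy lx ly. split.
    - intros z lz. apply (line_sub_flat (closure_flat (A:=fun z => z = x \/ z = y)) xy).
      apply sub_closure; auto. apply sub_closure; auto. apply (line_unique xy Ll lx ly); auto.
    - intros C hC. destruct (classic (exists c0 c1, C c0 /\ C c1 /\ c0 <> c1)) as [[c0 [c1 [h0 [h1 h01]]]]|N].
      + exists (fun s => if excluded_middle_informative (proj1_sig s = x) then exist C c0 h0 else exist C c1 h1).
        intros [s hs] [t ht]. simpl.
        destruct (excluded_middle_informative (s = x)) as [e|e]; destruct (excluded_middle_informative (t = x)) as [e'|e'];
          intros E; [apply sig_eq; congruence | injection E; congruence | injection E; congruence
          | apply sig_eq; destruct hs; destruct ht; congruence].
      + exfalso. apply xy. apply (@small_closure2 C).
        * intros c1 c2 h1 h2. apply NNPP. intro n. apply N. eauto.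
        * apply hC; auto.
        * apply hC; auto. }
  assert (rI : rank_basis L (fun z => l1 z /\ l2 z) (fun _ => False)).
  { split. intros z [a b']. exfalso. apply (disj z). auto.
    intros C _. exists (fun s : {x : X | False} => False_rect {x | C x} (proj2_sig s)). intros [a []]. }
  assert (rU : rank_basis L (fun z => l1 z \/ l2 z) BP).
  { split. intros z [h|h]; apply (proj1 rP); auto.
    intros C hC. apply card_le_3; auto.
    destruct (three_or_small C) as [h|h]; auto. exfalso.
    assert (hl := small_closure h d1 (hC x1 (or_introl x1l)) (hC y1 (or_introl y1l)) (hC x2 (or_intror x2l))).
    apply (disj x2). split; auto. apply (line_unique d1 L1 x1l y1l); auto. }
  destruct (M l1 l2 (flat_L L1) (flat_L L2) _ _ _ _ rI rU (rl l1 x1 y1 L1 d1 x1l y1l) (rl l2 x2 y2 L2 d2 x2l y2l))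
    as [e [e' [e'e ee']]].
  destruct eP as [fP [gP [gf fg]]].
  set (N := fun s => match e' s with inl p => 0 | inr b => proj1_sig (fP b) end).
  assert (Nlt : forall s, N s < 3).
  { intros s. unfold N. destruct (e' s) as [p|b]; [destruct (proj2_sig p)|]. apply (proj2_sig (fP b)). }
  assert (Ninj : forall s t, N s = N t -> s = t).
  { intros s t. unfold N. destruct (e' s) as [p|b] eqn:Es; [destruct (proj2_sig p)|].
    destruct (e' t) as [q|b'] eqn:Et; [destruct (proj2_sig q)|]. intros h.
    assert (E1 : fP b = fP b').
    { destruct (fP b), (fP b'). simpl in h. apply sig_eq; auto. }
    assert (E2 : b = b') by (rewrite <- (gf b), <- (gf b'), E1; auto).
    rewrite <- (ee' s), <- (ee' t), Es, Et, E2. auto. }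
  set (S1 := @inl {x | x = x1 \/ x = y1} {x | x = x2 \/ x = y2} (exist _ x1 (or_introl eq_refl))).
  set (S2 := @inl {x | x = x1 \/ x = y1} {x | x = x2 \/ x = y2} (exist _ y1 (or_intror eq_refl))).
  set (S3 := @inr {x | x = x1 \/ x = y1} {x | x = x2 \/ x = y2} (exist _ x2 (or_introl eq_refl))).
  set (S4 := @inr {x | x = x1 \/ x = y1} {x | x = x2 \/ x = y2} (exist _ y2 (or_intror eq_refl))).
  assert (n12 : N S1 <> N S2) by (intro h; apply Ninj in h; injection h; auto).
  assert (n13 : N S1 <> N S3) by (intro h; apply Ninj in h; discriminate).
  assert (n14 : N S1 <> N S4) by (intro h; apply Ninj in h; discriminate).
  assert (n23 : N S2 <> N S3) by (intro h; apply Ninj in h; discriminate).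
  assert (n24 : N S2 <> N S4) by (intro h; apply Ninj in h; discriminate).
  assert (n34 : N S3 <> N S4) by (intro h; apply Ninj in h; injection h; auto).
  assert (t1 := Nlt S1). assert (t2 := Nlt S2). assert (t3 := Nlt S3). assert (t4 := Nlt S4).
  lia.
Qed.

Lemma nodisj_SR : no_disjoint_coplanar_lines L -> strongly_regular L.
Proof.
  intros ND A b FA [a0 Aa0] nAb z. split.
  2:{ intros [a [Aa lab]]. assert (ab : a <> b) by (intro e; subst; contradiction).
      apply (line_sub_flat (closure_flat (A:=fun w => A w \/ w = b)) ab); auto; apply sub_closure; auto. }
  intros hz.
  apply (closure_min (A:=fun w => A w \/ w = b) (F:=fun z => exists a, A a /\ ln a b z)); auto.
  2:{ intros w [h| ->].
      - exists w. split; auto. apply line_x. intro e; subst; contradiction.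
      - exists a0. split; auto. apply line_y. intro e; subst; contradiction. }
  intros x y xy [a1 [A1 l1x]] [a2 [A2 l2y]] w hw.
  assert (a1b : a1 <> b) by (intro e; subst; contradiction).
  assert (a2b : a2 <> b) by (intro e; subst; contradiction).
  destruct (classic (a1 = a2)) as [e|a12].
  { subst a2. exists a1. split; auto. apply (line_eq a1b xy l1x l2y); auto. }
  destruct (classic (w = b)) as [wb|wb].
  { subst. exists a1. split; auto. apply line_y; auto. }
  set (B3 := fun v => v = a1 \/ v = a2 \/ v = b).
  set (P := cl B3).
  assert (FP : flat L P) by apply closure_flat.
  assert (Pa1 : P a1) by (apply sub_closure; left; auto).
  assert (Pa2 : P a2) by (apply sub_closure; right; left; auto).
  assert (Pb : P b) by (apply sub_closure; right; right; auto).
  assert (Px : P x) by (apply (line_sub_flat FP a1b Pa1 Pb); auto).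
  assert (Py : P y) by (apply (line_sub_flat FP a2b Pa2 Pb); auto).
  assert (Pw : P w) by (apply (line_sub_flat FP xy Px Py); auto).
  assert (plP : plane L P).
  { split; auto. exists B3. split.
    - split. intros v h; exact h.
      intros C hC. apply card_le_3.
      + apply equip3; auto.
      + destruct (three_or_small C) as [h|h]; auto. exfalso.
        assert (hl := small_closure h a12 (hC a1 Pa1) (hC a2 Pa2) (hC b Pb)).
        apply nAb. apply (FA a1 a2 a12 A1 A2). auto.
    - apply equip3; auto. }
  destruct (line_ex (not_eq_sym wb)) as [m1 [M1 [m1b m1w]]].
  destruct (line_ex a12) as [m2 [M2 [m2a1 m2a2]]].
  destruct (classic (exists v, m1 v /\ m2 v)) as [[v [h1 h2]]|N].
  - assert (Av : A v).
    { apply (FA a1 a2 a12 A1 A2). apply (line_unique a12 M2 m2a1 m2a2); auto. }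
    assert (vb : v <> b) by (intro e; subst; contradiction).
    exists v. split; auto. apply (line_unique vb M1 h1 m1b); auto.
  - exfalso. apply ND. exists m1, m2. split; auto. split; auto. split.
    + intros u hu. apply N. eauto.
    + exists P. split; auto. split.
      * intros u hu. apply (line_sub_flat FP (not_eq_sym wb) Pb Pw).
        apply (line_unique (not_eq_sym wb) M1 m1b m1w); auto.
      * intros u hu. apply (line_sub_flat FP a12 Pa1 Pa2).
        apply (line_unique a12 M2 m2a1 m2a2); auto.
Qed.

Section SR.
Hypothesis SR : strongly_regular L.
Definition indep (S : X -> Prop) := forall x, S x -> ~ cl (fun w => S w /\ w <> x) x.

Lemma exchange S b z : cl (fun w => S w \/ w = b) z -> ~ cl S z -> cl (fun w => S w \/ w = z) b.
Proof.
  intros hz nz.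
  destruct (classic (exists a, cl S a)) as [[a0 ha0]|N].
  - destruct (classic (cl S b)) as [Sb|nSb].
    + exfalso. apply nz. apply (closure_min (A:=fun w => S w \/ w = b) (F:=cl S)); auto.
      apply closure_flat. intros w [h| ->]; auto. apply sub_closure; auto.
    + assert (h' : cl (fun w => cl S w \/ w = b) z).
      { apply (closure_mono (A:=fun w => S w \/ w = b)); auto.
        intros w [h|h]; auto. left. apply sub_closure; auto. }
      apply (proj1 (@SR (cl S) b (closure_flat (A:=S)) (ex_intro _ a0 ha0) nSb z)) in h'.
      destruct h' as [a [ha lab]].
      assert (ab : a <> b) by (intro e; subst; contradiction).
      assert (za : z <> a) by (intro e; subst; contradiction).
      destruct (classic (z = b)) as [zb|zb].
      * subst. apply sub_closure. right; auto.
      * assert (azb : ln a z b).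
        { apply (line_eq ab (not_eq_sym za) (line_x ab) lab). apply line_y; auto. }
        apply (line_sub_flat (closure_flat (A:=fun w => S w \/ w = z)) (not_eq_sym za)); auto.
        -- apply (closure_mono (A:=S)); auto. intros w hw; auto.
        -- apply sub_closure. right; auto.
  - assert (S1 : subset (cl (fun w => S w \/ w = b)) (fun w => w = b)).
    { apply closure_min. apply flat_single. intros w [h|h]; auto.
      exfalso. apply N. exists w. apply sub_closure; auto. }
    rewrite (S1 _ hz). apply sub_closure. right; auto.
Qed.

Lemma indep_sub S T : indep S -> subset T S -> indep T.
Proof.
  intros iS TS x Tx h. apply (iS x (TS x Tx)).
  apply (closure_mono (A:=fun w => T w /\ w <> x)); auto.
  intros w [h1 h2]; auto.
Qed.

Lemma indep_add S c : indep S -> ~ cl S c -> indep (fun w => S w \/ w = c).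
Proof.
  intros iS nc x hx h.
  destruct (classic (x = c)) as [xc|xc].
  - subst. apply nc. apply (closure_mono (A:=fun w => (S w \/ w = c) /\ w <> c)); auto.
    intros w [[h1|h1] h2]; [auto|contradiction].
  - destruct hx as [Sx|e]; [|contradiction].
    assert (h2 : cl (fun w => (fun w => S w /\ w <> x) w \/ w = c) x).
    { apply (closure_mono (A:=fun w => (S w \/ w = c) /\ w <> x)); auto.
      intros w [[h1|h1] h2]; auto. }
    assert (h3 := exchange h2 (iS x Sx)).
    apply nc. apply (closure_mono (A:=fun w => (S w /\ w <> x) \/ w = x)); auto.
    intros w [[h4 _]| ->]; auto.
Qed.

Lemma indep_contra S x0 l : indep S -> S x0 -> (forall w, In w l -> S w /\ w <> x0) ->
  cl (fun w => In w l) x0 -> False.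
Proof.
  intros iS Sx hl hc. apply (iS x0 Sx). apply (closure_mono (A:=fun w => In w l)); auto.
Qed.

Lemma indep_fin S : (forall x0 l, S x0 -> (forall w, In w l -> S w /\ w <> x0) ->
  cl (fun w => In w l) x0 -> False) -> indep S.
Proof.
  intros H x Sx hc. destruct (finitary hc) as [l [hl hc']]. eapply H; eauto.
Qed.

Lemma extend I0 T : indep I0 -> subset I0 T ->
  exists I, subset I0 I /\ subset I T /\ indep I /\ subset T (cl I).
Proof.
  intros i0 I0T.
  destruct (@myZorn X (fun S => subset S T /\ indep (fun w => I0 w \/ S w))) as [S [[ST iS] mx]].
  - intros F FP Ftot. split.
    + intros w [S [FS Sw]]. apply (proj1 (FP S FS)); auto.
    + apply indep_fin. intros x0 l hx0 hl hc.
      destruct (@chain_list X X F (fun S w => S w) I0 Ftot (fun S1 S2 w h => h w) (x0 :: l))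
        as [all|[M [FM HM]]].
      * intros w [<-|hw]; [destruct hx0 as [h|h]; auto|destruct (hl w hw) as [[h|h] _]; auto].
      * apply (@indep_contra _ x0 l i0 (all x0 (or_introl eq_refl))); auto.
        intros w hw. split; [apply all; right; auto|apply (hl w hw)].
      * apply (@indep_contra _ x0 l (proj2 (FP M FM)) (HM x0 (or_introl eq_refl))); auto.
        intros w hw. split; [apply HM; right; auto|apply (hl w hw)].
  - exists (fun w => I0 w \/ S w). split; [intros w h; auto|]. split; [intros w [h|h]; auto|].
    split; auto. intros t Tt. apply NNPP. intro nt.
    assert (P' : subset (fun w => S w \/ w = t) T /\ indep (fun w => I0 w \/ (S w \/ w = t))).
    { split. intros w [h| ->]; auto.
      apply (indep_sub (indep_add iS nt)). intros w [h|[h|h]]; auto. }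
    assert (St : S t) by (apply (mx (fun w => S w \/ w = t)); auto; intros w h; auto).
    apply nt. apply sub_closure. auto.
Qed.

Definition Dset (I : X -> Prop) (G : X * X -> Prop) :=
  fun w => (I w /\ ~ exists y, G (w,y)) \/ exists x, G (x,w).

Definition PG (I C : X -> Prop) (G : X * X -> Prop) :=
  (forall x y, G (x,y) -> I x /\ C y) /\ (forall x y y', G (x,y) -> G (x,y') -> y = y') /\
  (forall x x' y, G (x,y) -> G (x',y) -> x = x') /\ (forall x y, G (x,y) -> I y -> exists z, G (y,z)) /\
  indep (Dset I G).

Lemma inj_exchange I C : indep I -> subset I (cl C) -> card_le {x | I x} {x | C x}.
Proof.
  intros iI IC.
  destruct (@myZorn (X * X) (PG I C)) as [G [[P1 [P2 [P3 [P4 P5]]]] mx]].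
  - intros F FP Ftot.
    split; [|split; [|split; [|split]]].
    + intros x y [S [FS h]]. apply (proj1 (FP S FS)); auto.
    + intros x y y' [S1 [F1 h1]] [S2 [F2 h2]].
      destruct (Ftot S1 S2 F1 F2) as [s|s].
      * apply (proj1 (proj2 (FP S2 F2)) x); auto.
      * apply (proj1 (proj2 (FP S1 F1)) x); auto.
    + intros x x' y [S1 [F1 h1]] [S2 [F2 h2]].
      destruct (Ftot S1 S2 F1 F2) as [s|s].
      * apply (proj1 (proj2 (proj2 (FP S2 F2))) x x' y); auto.
      * apply (proj1 (proj2 (proj2 (FP S1 F1))) x x' y); auto.
    + intros x y [S [FS h]] Iy. destruct (proj1 (proj2 (proj2 (proj2 (FP S FS)))) x y h Iy) as [z hz].
      exists z. exists S; auto.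
    + apply indep_fin. intros x0 l hx0 hl hc.
      destruct (@chain_list X (X*X) F (fun S w => exists x, S (x,w))
        (fun w => I w /\ ~ exists y, exists S, F S /\ S (w,y)) Ftot) with (l := x0 :: l)
        as [all|[M [FM HM]]].
      * intros S1 S2 w s [x h]. exists x; auto.
      * intros w hw.
        assert (D : Dset I (fun x => exists S, F S /\ S x) w).
        { destruct hw as [<-|hw]; auto. apply (hl w hw). }
        destruct D as [D|[x [S [FS h]]]]; auto. right. exists S. split; eauto.
      * apply (@indep_contra _ x0 l iI (proj1 (all x0 (or_introl eq_refl)))); auto.
        intros w hw. split; [apply all; right; auto|apply (hl w hw)].
      * apply (@indep_contra _ x0 l (proj2 (proj2 (proj2 (proj2 (FP M FM)))))); auto.
        -- destruct (HM x0 (or_introl eq_refl)) as [[h1 h2]|h]; [left|right; auto].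
           split; auto. intros [y hy]. apply h2. exists y, M; auto.
        -- intros w hw. split; [|apply (hl w hw)].
           destruct (HM w (or_intror hw)) as [[h1 h2]|h]; [left|right; auto].
           split; auto. intros [y hy]. apply h2. exists y, M; auto.
  - assert (Hdom : forall x, I x -> exists y, G (x,y)).
    { intros x Ix. apply NNPP. intro nx.
      set (D := Dset I G).
      assert (Dx : D x) by (left; auto).
      destruct (classic (exists c, C c /\ ~ cl (fun w => D w /\ w <> x) c)) as [[c [Cc nc]]|N].
      2:{ apply (P5 x Dx). apply (closure_min (A:=C)); [apply closure_flat| |apply IC; auto].
          intros c Cc. apply NNPP. intro h. apply N. eauto. }
      assert (cx : forall x1, G (x1, x) -> False).
      { intros x1 h. destruct (P4 x1 x h Ix) as [z hz]. apply nx; eauto. }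
      assert (PG' : PG I C (fun p => G p \/ p = (x,c))).
      { split; [|split; [|split; [|split]]].
        - intros x1 y [h|h]; auto. injection h; intros; subst; auto.
        - intros x1 y y' [h|h] [h'|h'].
          + apply (P2 x1); auto.
          + injection h'; intros; subst. exfalso; apply nx; eauto.
          + injection h; intros; subst. exfalso; apply nx; eauto.
          + injection h; injection h'; intros; subst; auto.
        - intros x1 x2 y [h|h] [h'|h'].
          + apply (P3 x1 x2 y); auto.
          + injection h'; intros; subst. exfalso.
            assert (cx' : c <> x) by (intro e; subst; apply (cx x1); auto).
            apply nc. apply sub_closure. split; auto. right; eauto.
          + injection h; intros; subst. exfalso.
            assert (cx' : c <> x) by (intro e; subst; apply (cx x2); auto).
            apply nc. apply sub_closure. split; auto. right; eauto.
          + injection h; injection h'; intros; subst; auto.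
        - intros x1 y [h|h] Iy.
          + destruct (P4 x1 y h Iy) as [z hz]. exists z; auto.
          + injection h; intros e1 e2; subst x1 y.
            destruct (classic (c = x)) as [e|ne].
            * exists c. right. rewrite e. reflexivity.
            * destruct (classic (exists z, G (c, z))) as [[z hz]|nz].
              -- exists z; auto.
              -- exfalso. apply nc. apply sub_closure. split; auto. left; auto.
        - apply (indep_sub (S := fun w => (D w /\ w <> x) \/ w = c)).
          + apply indep_add; auto. apply (indep_sub P5). intros w [h _]; auto.
          + intros w [[Iw nw]|[x1 [h|h]]].
            * left. split.
              -- left. split; auto. intros [y hy]. apply nw. exists y; auto.
              -- intro e; subst. apply nw. exists c; auto.
            * left. split. right; eauto. intro e; subst. apply (cx x1); auto.
            * injection h; intros; subst; auto. }
      assert (Gxc : G (x,c)).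
      { apply (mx (fun p => G p \/ p = (x,c))); auto. intros p h; auto. }
      apply nx; eauto. }
    exists (fun s => let (y, Hy) := constructive_indefinite_description _ (Hdom (proj1_sig s) (proj2_sig s)) in
                    exist C y (proj2 (P1 _ _ Hy))).
    intros [a Ia] [b Ib]. simpl.
    destruct (constructive_indefinite_description _ (Hdom a Ia)) as [ya Ha].
    destruct (constructive_indefinite_description _ (Hdom b Ib)) as [yb Hb].
    intros e. injection e; intros; subst.
    assert (a = b) by (apply (P3 a b yb); auto). subst.
    f_equal. apply proof_irrelevance.
Qed.

Lemma modlaw_list A B : flat L A -> flat L B -> forall l, (forall w, In w l -> A w \/ B w) ->
  forall z, B z -> cl (fun w => A w \/ In w l) z -> cl (fun w => (A w /\ B w) \/ (In w l /\ B w)) z.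
Proof.
  intros FA FB l. induction l as [|b l IH]; intros Hl z Bz hz.
  - apply sub_closure. left. split; auto.
    apply (closure_min (A:=fun w => A w \/ In w nil)); auto. intros w [h|[]]; auto.
  - set (T := fun w => (A w /\ B w) \/ (In w (b :: l) /\ B w)).
    set (A' := cl (fun w => A w \/ In w l)).
    assert (Hl' : forall w, In w l -> A w \/ B w) by (intros; apply Hl; right; auto).
    assert (mT : subset (cl (fun w => (A w /\ B w) \/ (In w l /\ B w))) (cl T)).
    { apply closure_mono. intros w [h|[h1 h2]]; [left; auto|right; split; auto; right; auto]. }
    assert (IH' : forall y, B y -> A' y -> cl T y) by (intros; apply mT; apply IH; auto).
    destruct (classic (A b)) as [Ab|nAb].
    + apply IH'; auto. apply (closure_min (A:=fun w => A w \/ In w (b :: l))); auto.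
      apply closure_flat. intros w [h|[<-|h]]; apply sub_closure; auto.
    + assert (Bb : B b) by (destruct (Hl b (or_introl eq_refl)); tauto).
      assert (hz' : cl (fun w => A' w \/ w = b) z).
      { apply (closure_mono (A:=fun w => A w \/ In w (b :: l))); auto.
        intros w [h|[<-|h]]; [left; apply sub_closure; auto|right; auto|left; apply sub_closure; auto]. }
      assert (Tb : cl T b) by (apply sub_closure; right; split; auto; left; auto).
      destruct (classic (A' b)) as [A'b|nA'b].
      * apply IH'; auto. apply (closure_min (A:=fun w => A' w \/ w = b)); auto.
        apply closure_flat. intros w [h| ->]; auto.
      * destruct (classic (exists a, A' a)) as [nem|em].
        -- apply (proj1 (@SR A' b (closure_flat (A:=_)) nem nA'b z)) in hz'.
           destruct hz' as [a [A'a lab]].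
           assert (ab : a <> b) by (intro e; subst; contradiction).
           destruct (classic (z = a)) as [za|za]; [subst; apply IH'; auto|].
           destruct (classic (z = b)) as [zb|zb]; [subst; auto|].
           assert (zba : ln z b a).
           { apply (line_eq ab zb lab (line_y ab)). apply line_x; auto. }
           assert (Ba : B a) by (apply (FB z b zb Bz Bb a zba)).
           apply (line_sub_flat (closure_flat (A:=T)) ab (IH' a Ba A'a) Tb). auto.
        -- assert (S1 : subset (cl (fun w => A' w \/ w = b)) (fun w => w = b)).
           { apply closure_min. apply flat_single. intros w [h|h]; auto. exfalso; eauto. }
           rewrite (S1 _ hz'). auto.
Qed.

Lemma modlaw A B S z : flat L A -> flat L B -> subset S B -> subset (fun w => A w /\ B w) (cl S) ->
  B z -> cl (fun w => A w \/ S w) z -> cl S z.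
Proof.
  intros FA FB SB ABS Bz hz. destruct (finitary hz) as [l [hl hc]].
  assert (h2 := @modlaw_list A B FA FB l (fun w hw => match hl w hw with or_introl a => or_introl a | or_intror s => or_intror (SB w s) end) z Bz
     (closure_mono (A:=fun w => In w l) (fun w hw => or_intror hw) hc)).
  apply (closure_min (A:=fun w => (A w /\ B w) \/ (In w l /\ B w))); auto. apply closure_flat.
  intros w [h|[h1 h2']]; auto. destruct (hl w h1); [apply ABS; auto|apply sub_closure; auto].
Qed.

Lemma eqp_basis Y BY J : rank_basis L Y BY -> indep J -> subset J Y -> subset Y (cl J) ->
  equipotent {x | BY x} {x | J x}.
Proof.
  intros [r1 r2] iJ JY YJ. apply SB; auto. apply inj_exchange; auto.
  intros w hw. apply r1. apply JY. auto.
Qed.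

Lemma SR_modular : modular L.
Proof.
  intros A B FA FB BI BU BA BB rI rU rA rB.
  destruct (@extend (fun _ => False) (fun z => A z /\ B z)) as [I [_ [IT [iI TI]]]].
  { intros x []. } { intros x []. }
  destruct (@extend I A iI) as [IA [IIA [IAA [iIA AIA]]]].
  { intros x h. apply (IT x h). }
  destruct (@extend IA (fun w => IA w \/ B w) iIA) as [IU [IAU [IUT [iIU TIU]]]].
  { intros x h; auto. }
  set (IB := fun w => I w \/ (IU w /\ ~ IA w)).
  assert (iIB : indep IB).
  { apply (indep_sub iIU). intros w [h|[h _]]; auto. }
  assert (IBB : subset IB B).
  { intros w [h|[h1 h2]]. apply (IT w h). destruct (IUT w h1); tauto. }
  assert (BIB : subset B (cl IB)).
  { intros z Bz. apply (@modlaw A B IB z FA FB IBB); auto.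
    - intros w h. apply (closure_mono (A:=I)). intros v hv; left; auto. apply TI; auto.
    - apply (closure_mono (A:=IU)). intros w h.
      destruct (classic (IA w)); [left; apply IAA; auto|right; right; auto].
      apply TIU; auto. }
  assert (UIU : subset (fun w => A w \/ B w) (cl IU)).
  { intros z [h|h]. apply (closure_mono (A:=IA)); auto. apply TIU; auto. }
  assert (IUAB : subset IU (fun w => A w \/ B w)).
  { intros z h. destruct (IUT z h); auto. }
  assert (e1 := eqp_basis rI iI IT TI).
  assert (e2 := eqp_basis rU iIU IUAB UIU).
  assert (e3 := eqp_basis rA iIA IAA AIA).
  assert (e4 := eqp_basis rB iIB IBB BIB).
  apply (eqp_trans (eqp_sum e1 e2)). apply (eqp_trans (middle_bij IIA IAU)).
  apply eqp_sym. apply (eqp_sum e3 e4).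
Qed.

End SR.
End Basic.

Theorem theorem5p5p1 (X : Type) (L : (X -> Prop) -> Prop) (HL : is_liner L) :
  (modular L <-> strongly_regular L) /\
  (strongly_regular L <-> no_disjoint_coplanar_lines L).
Proof.
  split; split.
  - intros M. apply (nodisj_SR HL). apply (mod_nodisj HL). exact M.
  - intros S. apply (SR_modular HL S).
  - intros S. apply (mod_nodisj HL). apply (SR_modular HL S).
  - intros N. apply (nodisj_SR HL N).
Qed.
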